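(* In the stochastic epidemic model described in the context, let $u(k)=K\,I(k)$ for all $k\ge0$ with a constant gain $\delta_{\max}/v_{\min}\le K\le (1-d_{\max})/v_{\max}$. Then for all $k\ge1$, with probability one, $$D(k)\le\begin{cases}\dfrac{d_{\max}I_0\left(1-(\delta_{\max}-Kv_{\min}+1)^k\right)}{Kv_{\min}-\delta_{\max}}, & \delta_{\max}<Kv_{\min},\\[2mm] d_{\max}I_0\,k, & \delta_{\max}=Kv_{\min}.\end{cases}$$
   Context: Time is indexed by days $k=0,1,2,\dots$. Let $(\delta(k))_{k\ge0}$, $(d_I(k))_{k\ge0}$, $(v(k))_{k\ge0}$ be three mutually independent sequences of random variables, each sequence i.i.d. in $k$, with $0\le \delta(k)\le \delta_{\max}$, $0\le d_I(k)\le d_{\max}$ where $d_{\max}<1$, and $0<v_{\min}\le v(k)\le v_{\max}\le 1$. Given a control sequence $u(k)$, the cases evolve by $S(k+1)=S(k)-\delta(k)I(k)$, $I(k+1)=(1+\delta(k))I(k)-v(k)u(k)-d_I(k)I(k)$, $R(k+1)=R(k)+v(k)u(k)$, $D(k+1)=D(k)+d_I(k)I(k)$, with $S(0)=S_0$, $I(0)=I_0>0$, $R(0)=D(0)=0$, $I_0\delta_{\max}<S_0$. *)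

(* Defs.v *)
From HB Require Import structures.
From mathcomp Require Import all_boot all_order all_algebra.
From mathcomp Require Import all_classical all_reals all_analysis.
Set Implicit Arguments. Unset Strict Implicit. Unset Printing Implicit Defensive.
Import Order.TTheory GRing.Theory Num.Theory.
Local Open Scope classical_set_scope.
Local Open Scope ring_scope.

Definition mutually_independent d (T : measurableType d) (R : realType)
  (P : probability T R) (I : eqType) (X : I -> {RV P >-> R}) : Prop :=
  forall (J : seq I) (B : I -> set R),
    uniq J -> (forall i, measurable (B i)) ->
    P (\bigcap_(i in [set` J]) (X i @^-1` B i)) =
    (\prod_(i <- J) P (X i @^-1` B i))%E.

Definition identically_distributed d (T : measurableType d) (R : realType)
  (P : probability T R) (X : nat -> {RV P >-> R}) : Prop :=
  forall k (B : set R), measurable B -> P (X k @^-1` B) = P (X 0 @^-1` B).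

Definition join3 (A : Type) (a b c : nat -> A) (i : (nat + nat + nat)%type) : A :=
  match i with inl (inl k) => a k | inl (inr k) => b k | inr k => c k end.

(* Main.v *)
Require Import Defs.
From HB Require Import structures.
From mathcomp Require Import all_boot all_order all_algebra.
From mathcomp Require Import all_classical all_reals all_analysis.
Import Order.TTheory GRing.Theory Num.Theory.
Local Open Scope classical_set_scope.
Local Open Scope ring_scope.


From mathcomp Require Import ring lra.

Lemma geom_sum_aux (R : realFieldType) (q : R) (k : nat) :
  (1 - q) * \sum_(j < k) q ^+ j = 1 - q ^+ k.
Proof.
elim: k => [|k IH]; first by rewrite big_ord0 expr0; lra.
rewrite big_ord_recr /= mulrDr IH exprS; ring.
Qed.

Theorem lemma8 (d : measure_display) (T : measurableType d) (R : realType)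
  (P : probability T R)
  (delta dI v : nat -> {RV P >-> R})
  (delta_max d_max v_min v_max S0 I0 K : R)
  (u S I Rc D : nat -> T -> R) :
  (* each sequence i.i.d., the three sequences mutually independent *)
  mutually_independent (join3 delta dI v) ->
  identically_distributed delta ->
  identically_distributed dI ->
  identically_distributed v ->
  (* bounds *)
  (forall k w, 0 <= delta k w <= delta_max) ->
  (forall k w, 0 <= dI k w <= d_max) -> d_max < 1 ->
  0 < v_min -> (forall k w, v_min <= v k w <= v_max) -> v_max <= 1 ->
  0 < I0 -> I0 * delta_max < S0 ->
  (* dynamics with feedback control u(k) = K I(k) *)
  (forall k w, u k w = K * I k w) ->
  (forall w, S 0 w = S0 /\ I 0 w = I0 /\ Rc 0 w = 0 /\ D 0 w = 0) ->
  (forall k w,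
      S k.+1 w = S k w - delta k w * I k w /\
      I k.+1 w = (1 + delta k w) * I k w - v k w * u k w - dI k w * I k w /\
      Rc k.+1 w = Rc k w + v k w * u k w /\
      D k.+1 w = D k w + dI k w * I k w) ->
  (* gain *)
  delta_max / v_min <= K -> K <= (1 - d_max) / v_max ->
  forall k : nat, (1 <= k)%N ->
    (delta_max < K * v_min ->
       {ae P, forall w, D k w <=
          d_max * I0 * (1 - (delta_max - K * v_min + 1) ^+ k)
            / (K * v_min - delta_max)}) /\
    (delta_max = K * v_min ->
       {ae P, forall w, D k w <= d_max * I0 * k%:R}).
Proof.
move=> _ _ _ _ hdel hdI hdm1 hvmin hv hvmax1 hI0 _ hu h0 hstep hK1 hK2 k _.
set q := delta_max - K * v_min + 1.
have key : forall w, D k w <= d_max * I0 * \sum_(j < k) q ^+ j.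
  move=> w.
  have hdm0 : 0 <= delta_max by case/andP: (hdel 0%N w) => a b; exact: le_trans a b.
  have hK0 : 0 <= K by apply: le_trans hK1; exact: divr_ge0 (ltW hvmin).
  have hvm : 0 < v_max by case/andP: (hv 0%N w) => a b; exact: lt_le_trans hvmin (le_trans a b).
  have hKv : K * v_max <= 1 - d_max by rewrite -ler_pdivlMr.
  have inv : forall n, (0 <= I n w <= I0 * q ^+ n) /\
                       D n w <= d_max * I0 * \sum_(j < n) q ^+ j.
    elim=> [|n [/andP [Ilo Ihi] IHD]].
      case: (h0 w) => _ [-> [_ ->]]; rewrite big_ord0 expr0 mulr0 mulr1 lexx andbT; lra.
    case: (hstep n w) => _ [hI [_ hD]].
    case/andP: (hdel n w) => d0 d1. case/andP: (hdI n w) => e0 e1.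
    case/andP: (hv n w) => v0 v1.
    rewrite hu in hI.
    have eqI : I n.+1 w = (1 + delta n w - v n w * K - dI n w) * I n w by rewrite hI; ring.
    have c0 : 0 <= 1 + delta n w - v n w * K - dI n w.
      have : v n w * K <= v_max * K by apply: ler_wpM2r.
      lra.
    have c1 : 1 + delta n w - v n w * K - dI n w <= q.
      have : v_min * K <= v n w * K by apply: ler_wpM2r.
      rewrite /q; lra.
    have qI : 0 <= I0 * q ^+ n by exact: le_trans Ilo Ihi.
    split.
      rewrite eqI mulr_ge0 //=.
      have -> : I0 * q ^+ n.+1 = q * (I0 * q ^+ n) by rewrite exprS; ring.
      by apply: ler_pM.
    rewrite hD big_ord_recr /= mulrDr.
    apply: lerD => //.
    rewrite -mulrA; apply: ler_pM => //.
  by case: (inv k).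
split=> hq; apply: aeW => w.
  have hq1 : 1 - q != 0 by rewrite /q; apply/eqP; lra.
  have -> : K * v_min - delta_max = 1 - q by rewrite /q; ring.
  have hs := @geom_sum_aux R q k.
  rewrite -hs [(1 - q) * _]mulrC mulrA mulfK //.

have q1 : q = 1 by rewrite /q hq; ring.
have := key w; rewrite q1.
under eq_bigr do rewrite expr1n.
by rewrite sumr_const card_ord.
Qed.
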